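(* For every integer $n\ge 0$, $$\sum_{\pi\in \mathcal I^C_{2n}(321)}q^{\mathrm{des}^+(\pi)}=\sum_{k\geq 0} \binom{n+1}{2k}q^k=\frac{(1+\sqrt{q})^{n+1}+(1-\sqrt{q})^{n+1}}{2}.$$
   Context: A permutation $\pi\in\mathcal S_m$ is centrosymmetric if $\pi(i)+\pi(m+1-i)=m+1$ for all $1\le i\le m$. $\mathcal I^C_m(321)$ denotes the set of centrosymmetric involutions $\pi\in\mathcal S_m$ (i.e. $\pi=\pi^{-1}$) that avoid the pattern $321$ (no indices $i<j<k$ with $\pi(i)>\pi(j)>\pi(k)$). A descent of $\pi\in\mathcal S_m$ is a position $i\in\{1,\dots,m-1\}$ with $\pi(i)>\pi(i+1)$; $\mathrm{Des}(\pi)$ is the set of descents. For $\pi\in\mathcal S_m$ with $n=\lfloor m/2\rfloor$, $\mathrm{Des}^+(\pi)=\mathrm{Des}(\pi)\cap\{1,\dots,n\}$ and $\mathrm{des}^+(\pi)=|\mathrm{Des}^+(\pi)|$. *)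

(* Defs.v *)
From HB Require Import structures.
From mathcomp Require Import all_boot all_order all_algebra all_fingroup.
Set Implicit Arguments. Unset Strict Implicit. Unset Printing Implicit Defensive.

(* Permutations of {1..m} are represented as pi : 'S_m acting on 'I_m = {0..m-1};
   the 1-based value of pi at 1-based position i+1 is (pi i).+1. *)

(* centrosymmetric: pi(i) + pi(m+1-i) = m+1 (1-based);
   0-based position i corresponds to 1-based i+1, and rev_ord i (value m-1-i)
   to 1-based m+1-(i+1). *)
Definition centrosymmetric (m : nat) (pi : 'S_m) : bool :=
  [forall i : 'I_m, (pi i).+1 + (pi (rev_ord i)).+1 == m.+1].

Definition involution (m : nat) (pi : 'S_m) : bool := (pi^-1)%g == pi.

Definition avoids321 (m : nat) (pi : 'S_m) : bool :=
  ~~ [exists i : 'I_m, exists j : 'I_m, exists k : 'I_m,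
        [&& i < j, j < k, pi j < pi i & pi k < pi j]].

Definition IC321 (m : nat) (pi : 'S_m) : bool :=
  [&& centrosymmetric pi, involution pi & avoids321 pi].

Definition oneline (m : nat) (pi : 'S_m) : seq nat := [seq val (pi i) | i <- enum 'I_m].

(* descent at 1-based position p in {1..m-1}: pi(p) > pi(p+1).
   With 0-based j = p-1: nth j > nth (j+1), j+1 < m. *)
Definition is_descent (m : nat) (pi : 'S_m) (p : nat) : bool :=
  [&& 1 <= p, p < m & nth 0 (oneline pi) p.-1 > nth 0 (oneline pi) p].

Definition desplus (m : nat) (pi : 'S_m) : nat :=
  \sum_(1 <= p < (m./2).+1) is_descent pi p.

(* Main.v *)
Require Import Defs.
From HB Require Import structures.
From mathcomp Require Import all_boot all_order all_algebra all_fingroup.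
From mathcomp Require Import zify ring.
Set Implicit Arguments. Unset Strict Implicit. Unset Printing Implicit Defensive.
Import Order.TTheory GRing.Theory Num.Theory.

Fixpoint endsS (s : seq bool) : nat :=
  match s with
  | [::] => 0
  | x :: s' => (x && ((s' == [::]) || ~~ head false s')) + endsS s'
  end.


Section Generic.
Variable m : nat.

Definition bnd (f : nat -> nat) := forall x, x < m -> f x < m.
Definition invl (f : nat -> nat) := forall x, x < m -> f (f x) = x.
Definition incE (f : nat -> nat) :=
  forall x y, x < y -> y < m -> x < f x -> y < f y -> f x < f y.
Definition incD (f : nat -> nat) :=
  forall x y, x < y -> y < m -> f x < x -> f y < y -> f x < f y.
Definition fcond (f : nat -> nat) :=
  forall e x, e < x -> x < f e -> f e < m -> f x = x -> False.
Definition av (f : nat -> nat) :=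
  forall i j k, i < j -> j < k -> k < m -> f j < f i -> f k < f j -> False.

Lemma av_incE f : bnd f -> invl f -> av f -> incE f.
Proof.
move=> B I A x y xy ym xf yf; rewrite ltnNge; apply/negP => le.
have fyx : f y != f x.
  apply/negP => /eqP e; have := I x (ltn_trans xy ym); have := I y ym.
  by rewrite e => -> H; move: xy; rewrite H ltnn.
have lt : f y < f x by rewrite ltn_neqAle fyx le.
apply: (A x y (f y)) => //; first exact: B.
by rewrite I.
Qed.

Lemma av_incD f : bnd f -> invl f -> av f -> incD f.
Proof.
move=> B I A x y xy ym xf yf; rewrite ltnNge; apply/negP => le.
have fyx : f y != f x.
  apply/negP => /eqP e; have := I x (ltn_trans xy ym); have := I y ym.
  by rewrite e => -> H; move: xy; rewrite H ltnn.
have lt : f y < f x by rewrite ltn_neqAle fyx le.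
apply: (A (f x) x y) => //; by rewrite I // (ltn_trans xy ym).
Qed.

Lemma av_fcond f : bnd f -> invl f -> av f -> fcond f.
Proof.
move=> B I A e x ex xfe fem fx.
have em : e < m by lia.
apply: (A e x (f e)) => //; first by rewrite fx.
by rewrite I // fx.
Qed.

Lemma av_of f : bnd f -> invl f -> incE f -> incD f -> fcond f -> av f.
Proof.
move=> B I IE ID FC i j k ij jk km fji fkj.
have jm : j < m by lia.
have im : i < m by lia.
case: (ltngtP j (f j)) => [jE|jD|jF].
- case: (ltnP i (f i)) => [iE|iN].
    by have := IE i j ij jm iE jE; lia.
  lia.
- case: (ltnP (f k) k) => [kD|kN].
    by have := ID j k jk km jD kD; lia.
  lia.
- case: (ltnP i (f i)) => [iE|iN]; last lia.
  apply: (FC i j ij); [lia | exact: B | by rewrite -jF].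
Qed.

Lemma desc_char f : bnd f -> invl f -> incE f -> incD f -> fcond f ->
  forall j, j.+1 < m -> (f j.+1 < f j) = (j < f j) && (f j.+1 < j.+1).
Proof.
move=> B I IE ID FC j jm.
have j0 : j < m by lia.
case: (ltngtP j (f j)) => [jE|jD|jF].
- case: (ltngtP (f j.+1) j.+1) => [kD|kE|kF]; first lia.
    by have := IE j j.+1 (ltnSn j) jm jE kE; lia.
  apply/negP => lt; apply: (FC j j.+1) => //; [lia | exact: B].
- case: (ltngtP (f j.+1) j.+1) => [kD|kE|kF]; rewrite /=.
  + by have := ID j j.+1 (ltnSn j) jm jD kD; lia.
  + lia.
  + lia.
- case: (ltngtP (f j.+1) j.+1) => [kD|kE|kF]; rewrite /=.
  + apply/negP => lt.
    have e0 : f j.+1 < j by lia.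
    apply: (FC (f j.+1) j e0); [by rewrite I | by rewrite I | by rewrite -jF].
  + lia.
  + lia.
Qed.

Lemma rep_step f1 f2 : bnd f1 -> bnd f2 -> invl f1 -> invl f2 -> incE f2 ->
  (forall x, x < m -> (x < f1 x) = (x < f2 x)) ->
  (forall x, x < m -> (f1 x < x) = (f2 x < x)) ->
  forall x, x < m -> x < f1 x ->
  (forall e, e < x -> e < f1 e -> f1 e = f2 e) -> ~ (f1 x < f2 x).
Proof.
move=> B1 B2 I1 I2 IE2 HE HD x xm xE IH lt.
set y := f1 x.
have ym : y < m by exact: B1.
have yD1 : f1 y < y by rewrite /y I1.
have yD2 : f2 y < y by rewrite -HD.
set z := f2 y.
have zm : z < m by exact: B2.
have zE2 : z < f2 z by rewrite /z I2.
have zE1 : z < f1 z by rewrite HE.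
case: (ltngtP z x) => [zx|xz|zx].
- have := IH z zx zE1; rewrite /z I2 // => e.
  have : f1 (f1 z) = f1 (f1 x) by rewrite e.
  rewrite !I1 // => ezx; lia.
- have xE2 : x < f2 x by rewrite -HE.
  have := IE2 x z xz zm xE2 zE2; rewrite /z I2 //; lia.
- have : f2 z = f2 x by rewrite zx.
  rewrite /z I2 // => e; lia.
Qed.

Lemma rep f1 f2 : bnd f1 -> bnd f2 -> invl f1 -> invl f2 -> incE f1 -> incE f2 ->
  (forall x, x < m -> (x < f1 x) = (x < f2 x)) ->
  (forall x, x < m -> (f1 x < x) = (f2 x < x)) ->
  forall x, x < m -> f1 x = f2 x.
Proof.
move=> B1 B2 I1 I2 IE1 IE2 HE HD.
have HE_ : forall x, x < m -> x < f1 x -> f1 x = f2 x.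
  elim/ltn_ind => x IH xm xE.
  have IH' : forall e, e < x -> e < f1 e -> f1 e = f2 e.
    by move=> e ex; apply: IH => //; lia.
  have IH'' : forall e, e < x -> e < f2 e -> f2 e = f1 e.
    move=> e ex eE; apply/esym/IH' => //; rewrite HE //; lia.
  have xE2 : x < f2 x by rewrite -HE.
  have h1 := rep_step B1 B2 I1 I2 IE2 HE HD xm xE IH'.
  have h2 := rep_step B2 B1 I2 I1 IE1 (fun x h => esym (HE x h))
                 (fun x h => esym (HD x h)) xm xE2 IH''.
  lia.
move=> x xm; case: (ltngtP x (f1 x)) => [xE|xD|xF].
- exact: HE_.
- have fxm : f1 x < m by exact: B1.
  have fxE : f1 x < f1 (f1 x) by rewrite I1.
  have e := HE_ _ fxm fxE.
  have : f2 (f2 (f1 x)) = f2 (f1 (f1 x)) by rewrite -e.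
  by rewrite I2 // I1.
- have : ~~ (x < f2 x) && ~~ (f2 x < x) by rewrite -HE // -HD // -xF ltnn.
  lia.
Qed.

End Generic.

Definition cnt (P : pred nat) x := count P (iota 0 x).

Lemma cntS (P : pred nat) x : cnt P x.+1 = cnt P x + P x.
Proof. by rewrite /cnt -addn1 iotaD count_cat /= addn0. Qed.

Lemma cntD (P : pred nat) x k : cnt P (x + k) = cnt P x + count P (iota x k).
Proof. by rewrite /cnt iotaD count_cat. Qed.

Lemma cnt_mono (P : pred nat) x y : x <= y -> cnt P x <= cnt P y.
Proof. by move=> /subnK <-; rewrite addnC cntD leq_addr. Qed.

Lemma cnt_lt (P : pred nat) x y : x < y -> P x -> cnt P x < cnt P y.
Proof.
move=> xy Px; apply: (@leq_trans (cnt P x.+1)); last exact: cnt_mono.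
by rewrite cntS Px addn1.
Qed.

Lemma count_refl (P : pred nat) a k c : a + k <= c.+1 ->
  count (fun y => P (c - y)) (iota a k) = count P (iota (c.+1 - a - k) k).
Proof.
elim: k a => [|k IH] a le //=.
rewrite IH; last lia.
set s := c.+1 - a - k.+1.
have -> : c.+1 - a.+1 - k = s by rewrite /s; lia.
have e2 : count P (iota s k.+1) = count P (iota s k) + P (s + k).
  by rewrite -addn1 iotaD count_cat /= addn0.
have -> : c - a = s + k by rewrite /s; lia.
by move: e2 => /=; lia.
Qed.

Section Rank.
Variables (m : nat) (P : pred nat).
Definition nthP r := nth 0 (filter P (iota 0 m)) r.

Lemma index_filter y : P y -> y < m -> index y (filter P (iota 0 m)) = cnt P y.
Proof.
move=> Py ym.
have -> : iota 0 m = iota 0 y ++ y :: iota y.+1 (m - y.+1).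
  by rewrite {1}(_ : m = y + (m - y.+1).+1); [rewrite iotaD | lia].
rewrite filter_cat /= Py index_cat.
have -> : (y \in filter P (iota 0 y)) = false.
  by apply/negbTE; rewrite mem_filter mem_iota add0n ltnn !andbF.
by rewrite /= eqxx addn0 size_filter.
Qed.

Lemma nthP_cnt y : P y -> y < m -> nthP (cnt P y) = y.
Proof.
move=> Py ym; rewrite /nthP -index_filter //.
by apply: nth_index; rewrite mem_filter Py mem_iota.
Qed.

Lemma nthP_spec r : r < cnt P m ->
  [/\ P (nthP r), nthP r < m & cnt P (nthP r) = r].
Proof.
move=> rlt.
have rs : r < size (filter P (iota 0 m)) by rewrite size_filter.
have : nthP r \in filter P (iota 0 m) by exact: mem_nth.
rewrite mem_filter mem_iota add0n => /andP[Py ym]; split => //.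
rewrite -index_filter // /nthP index_uniq //.
exact/filter_uniq/iota_uniq.
Qed.
End Rank.

Fixpoint hf (b : nat -> bool) x :=
  if x is x'.+1 then (if b x' then (hf b x').+1 else (hf b x').-1) else 0.

Section Construct.
Variables (n : nat) (b : nat -> bool).
Local Notation m := n.*2.

Definition isDh x := ~~ b x && (0 < hf b x).
Definition isE x := (x < m) && (if x < n then b x else isDh (m.-1 - x)).
Definition isD x := (x < m) && (if x < n then isDh x else b (m.-1 - x)).

Lemma H0 z : z <= n -> hf b z + cnt isDh z = cnt b z.
Proof.
elim: z => [|z IH] zn //=.
rewrite !cntS -IH; last lia.
rewrite /isDh; case: (b z) => /=; first lia.
case: (hf b z) => //= h; lia.
Qed.

Lemma cE_low z : z <= n -> cnt isE z = cnt b z.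
Proof.
move=> zn; apply: eq_in_count => y; rewrite mem_iota => /andP[_ yz].
have h1 : y < m by lia.
have h2 : y < n by lia.
by rewrite /isE h1 h2.
Qed.

Lemma cD_low z : z <= n -> cnt isD z = cnt isDh z.
Proof.
move=> zn; apply: eq_in_count => y; rewrite mem_iota => /andP[_ yz].
have h1 : y < m by lia.
have h2 : y < n by lia.
by rewrite /isD h1 h2.
Qed.

Lemma cE_high z : z <= n ->
  cnt isE (m - z) = cnt b n + count isDh (iota z (n - z)).
Proof.
move=> zn; rewrite (_ : m - z = n + (n - z)); last lia.
rewrite cntD cE_low //; congr (_ + _).
case: (posnP (n - z)) => [->|nz] //.
have -> : iota z (n - z) = iota (m.-1.+1 - n - (n - z)) (n - z) by congr iota; lia.
rewrite -(count_refl isDh); last lia.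
apply: eq_in_count => y; rewrite mem_iota => /andP[ny yn].
have h1 : y < m by lia.
have h2 : (y < n) = false by lia.
by rewrite /isE h1 h2.
Qed.

Lemma cD_high z : z <= n ->
  cnt isD (m - z) = cnt isDh n + count b (iota z (n - z)).
Proof.
move=> zn; rewrite (_ : m - z = n + (n - z)); last lia.
rewrite cntD cD_low //; congr (_ + _).
case: (posnP (n - z)) => [->|nz] //.
have -> : iota z (n - z) = iota (m.-1.+1 - n - (n - z)) (n - z) by congr iota; lia.
rewrite -(count_refl b); last lia.
apply: eq_in_count => y; rewrite mem_iota => /andP[ny yn].
have h1 : y < m by lia.
have h2 : (y < n) = false by lia.
by rewrite /isD h1 h2.
Qed.
Lemma hlo z : z <= n -> cnt isE z = cnt isD z + hf b z.
Proof. by move=> zn; rewrite cE_low // cD_low // -H0 // addnC. Qed.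

Lemma hhi z : z <= n -> cnt isE (m - z) = cnt isD (m - z) + hf b z.
Proof.
move=> zn; rewrite cE_high // cD_high //.
have e1 : cnt b n = cnt b z + count b (iota z (n - z)).
  by rewrite -cntD subnKC.
have e2 : cnt isDh n = cnt isDh z + count isDh (iota z (n - z)).
  by rewrite -cntD subnKC.
have := H0 zn; have := H0 (leqnn n); lia.
Qed.

Lemma H1 x : x <= m -> cnt isD x <= cnt isE x.
Proof.
move=> xm; case: (leqP x n) => xn; first by rewrite hlo //; lia.
have -> : x = m - (m - x) by lia.
rewrite hhi; lia.
Qed.

Lemma H3 : cnt isE m = cnt isD m.
Proof. by have := hhi (leq0n n); rewrite subn0 /= addn0. Qed.

Lemma H2 x : x < m -> ~~ isE x -> ~~ isD x -> cnt isD x = cnt isE x.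
Proof.
move=> xm; case: (ltnP x n) => xn.
  rewrite /isE /isD xm xn /= /isDh => nb; rewrite nb /= -leqNgt leqn0 => /eqP h0.
  by rewrite hlo ?h0 ?addn0 //; lia.
set z := m.-1 - x.
have zn : z < n by rewrite /z; lia.
have nxn : (x < n) = false by lia.
rewrite /isE /isD xm nxn /= -/z /isDh => h1 nb.
rewrite nb /= -leqNgt leqn0 in h1.
have hz : hf b z.+1 = 0 by rewrite /= (negbTE nb) (eqP h1).
have -> : x = m - z.+1 by rewrite /z; lia.
by rewrite hhi // hz addn0.
Qed.

Lemma disjED x : isE x -> isD x = false.
Proof.
rewrite /isE /isD /isDh; case: (x < m) => //=; case: (x < n) => /=.
  by move=> ->.
by case/andP => /negbTE ->.
Qed.

Lemma isD_refl x : x < m -> isD (m.-1 - x) = isE x.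
Proof.
move=> xm; rewrite /isD /isE xm (_ : m.-1 - x < m); last lia.
case: (ltnP x n) => xn.
  by rewrite (_ : (m.-1 - x < n) = false); [congr b; lia | lia].
by rewrite (_ : m.-1 - x < n); last lia.
Qed.

Lemma isE_refl x : x < m -> isE (m.-1 - x) = isD x.
Proof.
move=> xm; rewrite /isD /isE xm (_ : m.-1 - x < m); last lia.
case: (ltnP x n) => xn.
  by rewrite (_ : (m.-1 - x < n) = false); [congr isDh; lia | lia].
by rewrite (_ : m.-1 - x < n); last lia.
Qed.

Definition g x :=
  if isE x then nthP m isD (cnt isE x) else if isD x then nthP m isE (cnt isD x) else x.

Lemma isE_lt x : isE x -> x < m. Proof. by case/andP. Qed.
Lemma isD_lt x : isD x -> x < m. Proof. by case/andP. Qed.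

Lemma disjDE x : isD x -> isE x = false.
Proof. by move=> h; apply/negP => /disjED; rewrite h. Qed.

Lemma gE x : isE x -> [/\ isD (g x), g x < m & cnt isD (g x) = cnt isE x].
Proof.
move=> xE; rewrite /g xE; apply: nthP_spec.
rewrite -H3; apply: cnt_lt => //; exact: isE_lt.
Qed.

Lemma gD x : isD x -> [/\ isE (g x), g x < m & cnt isE (g x) = cnt isD x].
Proof.
move=> xD; rewrite /g (disjDE xD) xD /=; apply: nthP_spec.
rewrite H3; apply: cnt_lt => //; exact: isD_lt.
Qed.

Lemma gF x : ~~ isE x -> ~~ isD x -> g x = x.
Proof. by rewrite /g => /negbTE -> /negbTE ->. Qed.

Lemma g_bnd : bnd m g.
Proof.
move=> x xm; case xE: (isE x); first by case: (gE xE).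
case xD: (isD x); first by case: (gD xD).
by rewrite gF ?xE ?xD.
Qed.

Lemma g_invl : invl m g.
Proof.
move=> x xm; case xE: (isE x).
  have [yD ym yc] := gE xE.
  by rewrite {1}/g disjDE // yD yc nthP_cnt // isE_lt.
case xD: (isD x).
  have [yE ym yc] := gD xD.
  by rewrite {1}/g yE yc nthP_cnt // isD_lt.
by rewrite !gF ?xE ?xD.
Qed.

Lemma g_Eof x : isE x -> x < g x.
Proof.
move=> xE; have [yD ym yc] := gE xE.
rewrite ltnNge; apply/negP => le.
have ne : g x != x by apply/eqP => e; move: yD; rewrite e disjED.
have lt : g x < x by rewrite ltn_neqAle ne le.
have := cnt_lt lt yD; rewrite yc => h.
have := H1 (ltnW (isE_lt xE)); lia.
Qed.

Lemma g_Dof x : isD x -> g x < x.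
Proof.
move=> xD; have [yE ym yc] := gD xD.
have := g_Eof yE; by rewrite g_invl // isD_lt.
Qed.

Lemma g_E x : x < m -> (x < g x) = isE x.
Proof.
move=> xm; case xE: (isE x); first exact: g_Eof.
case xD: (isD x); first by have := g_Dof xD; lia.
by rewrite gF ?xE ?xD // ltnn.
Qed.

Lemma g_D x : x < m -> (g x < x) = isD x.
Proof.
move=> xm; case xD: (isD x); first exact: g_Dof.
case xE: (isE x); first by have := g_Eof xE; lia.
by rewrite gF ?xE ?xD // ltnn.
Qed.

Lemma g_incE : incE m g.
Proof.
move=> x y xy ym; rewrite g_E ?g_E //; last lia.
move=> xE yE; have [xD _ xc] := gE xE; have [yD _ yc] := gE yE.
have lt := cnt_lt xy xE.
rewrite ltnNge; apply/negP => le.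
have := cnt_mono isD le; lia.
Qed.

Lemma g_incD : incD m g.
Proof.
move=> x y xy ym; rewrite g_D ?g_D //; last lia.
move=> xD yD; have [xE _ xc] := gD xD; have [yE _ yc] := gD yD.
have lt := cnt_lt xy xD.
rewrite ltnNge; apply/negP => le.
have := cnt_mono isE le; lia.
Qed.

Lemma g_fcond : fcond m g.
Proof.
move=> e x ex xge gem gx.
have xm : x < m by lia.
have em : e < m by lia.
have eE : isE e by rewrite -g_E // ; lia.
have nE : ~~ isE x by rewrite -g_E // gx ltnn.
have nD : ~~ isD x by rewrite -g_D // gx ltnn.
have h2 := H2 xm nE nD.
have h3 := cnt_lt ex eE.
have [_ _ c] := gE eE.
have := cnt_mono isD (ltnW xge); lia.
Qed.

Lemma g_av : av m g.
Proof. exact: av_of g_bnd g_invl g_incE g_incD g_fcond. Qed.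

Lemma g_centro x : x < m -> g (m.-1 - x) = m.-1 - g x.
Proof.
pose s y := m.-1 - g (m.-1 - y).
have sb : bnd m s by move=> y ym; rewrite /s; lia.
have gb := g_bnd.
have si : invl m s.
  move=> y ym; rewrite /s.
  have h : m.-1 - y < m by lia.
  have := gb _ h => h'.
  rewrite (_ : m.-1 - (m.-1 - g (m.-1 - y)) = g (m.-1 - y)); last lia.
  rewrite g_invl //; lia.
have sE : forall y, y < m -> (y < s y) = (y < g y).
  move=> y ym; have h : m.-1 - y < m by lia.
  have := gb _ h => h'.
  rewrite /s g_E // -isD_refl // -g_D //; lia.
have sD : forall y, y < m -> (s y < y) = (g y < y).
  move=> y ym; have h : m.-1 - y < m by lia.
  have := gb _ h => h'.
  rewrite /s g_D // -isE_refl // -g_E //; lia.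
have sIE : incE m s.
  move=> x1 y1 xy ym h1 h2; rewrite /s in h1 h2 *.
  have a1 : m.-1 - x1 < m by lia.
  have a2 : m.-1 - y1 < m by lia.
  have b1 := gb _ a1; have b2 := gb _ a2.
  have H := g_incD (_ : m.-1 - y1 < m.-1 - x1) a1.
  have := H ltac:(lia) ltac:(lia) ltac:(lia); lia.
move=> xm.
have := rep sb gb si g_invl sIE g_incE sE sD xm.
rewrite /s => e; have := gb _ xm; have h : m.-1 - x < m by lia.
have := gb _ h; lia.
Qed.
End Construct.

Section Struct.
Variables (m : nat) (f : nat -> nat).
Hypotheses (B : bnd m f) (I : invl m f) (FC : fcond m f).

Definition Ef y := y < f y.
Definition Df y := f y < y.

Lemma f_inj x y : x < m -> y < m -> f x = f y -> x = y.
Proof. by move=> xm ym e; rewrite -(I xm) -(I ym) e. Qed.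

Lemma ballot_aux x : x <= m ->
  [/\ uniq (map f (filter Df (iota 0 x))),
      {subset map f (filter Df (iota 0 x)) <= filter Ef (iota 0 x)} &
      size (map f (filter Df (iota 0 x))) = cnt Df x].
Proof.
move=> xm; split.
- rewrite map_inj_in_uniq ?filter_uniq ?iota_uniq // => u v.
  rewrite !mem_filter !mem_iota /= => /andP[_ ux] /andP[_ vx].
  apply: f_inj; lia.
- move=> y /mapP[d]; rewrite mem_filter mem_iota /Df /= => /andP[dD dx] ->.
  rewrite mem_filter mem_iota /Ef I /=; lia.
- by rewrite size_map size_filter.
Qed.

Lemma ballot x : x <= m -> cnt Df x <= cnt Ef x.
Proof.
move=> xm; have [u s e] := ballot_aux xm.
by rewrite -e /cnt -size_filter; apply: uniq_leq_size.
Qed.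

Lemma heightD x : x < m -> f x < x -> cnt Df x < cnt Ef x.
Proof.
move=> xm fx; have [u s e] := ballot_aux (ltnW xm).
rewrite -e /cnt -size_filter -/(size (f x :: _)); apply: uniq_leq_size.
  rewrite cons_uniq u andbT; apply/negP => /mapP[d].
  rewrite mem_filter mem_iota /= => /andP[_ dx] e'.
  have := f_inj xm (_ : d < m) e'; lia.
move=> y; rewrite inE => /orP[/eqP ->|]; last exact: s.
rewrite mem_filter mem_iota /Ef I //=; lia.
Qed.

Lemma heightF x : x < m -> f x = x -> cnt Df x = cnt Ef x.
Proof.
move=> xm fx; apply/eqP; rewrite eqn_leq ballot ?(ltnW xm) //=.
rewrite /cnt -!size_filter.
have -> : size (filter Ef (iota 0 x)) = size (map f (filter Ef (iota 0 x))) by rewrite size_map.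
apply: uniq_leq_size.
  rewrite map_inj_in_uniq ?filter_uniq ?iota_uniq // => u v.
  rewrite !mem_filter !mem_iota /= => /andP[_ ux] /andP[_ vx].
  apply: f_inj; lia.
move=> y /mapP[e]; rewrite mem_filter mem_iota /Ef /= => /andP[eE ex] ->.
have em : e < m by lia.
have fem := B em.
have fex : f e < x.
  case: (ltngtP (f e) x) => // h; first by case: (FC ex h fem fx).
  by have := f_inj em xm; rewrite fx -h => /(_ erefl); lia.
rewrite mem_filter mem_iota /Df I //=; lia.
Qed.

Variable n : nat.
Variable b : nat -> bool.
Hypothesis bE : forall x, x < n -> b x = (x < f x).
Hypothesis mn : m = n.*2.

Lemma struct_aux z : z <= n ->
  hf b z + cnt Df z = cnt Ef z /\ forall y, y < z -> isDh b y = (f y < y).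
Proof.
elim: z => [|z IH] zn; first by split.
have [IH1 IH2] := IH (ltnW zn).
have zm : z < m by lia.
have hz : isDh b z = (f z < z).
  rewrite /isDh bE; last lia.
  case: (ltngtP z (f z)) => [h|h|h] /=.
  - lia.
  - have := heightD zm h; lia.
  - have := heightF zm (esym h); lia.
split.
  rewrite !cntS -IH1 /= bE; last lia.
  move: hz; rewrite /isDh bE; last lia.
  rewrite /Df /Ef; case: (ltngtP z (f z)) => [h|h|h] /=; lia.
move=> y; rewrite ltnS leq_eqVlt => /orP[/eqP ->|] //; apply: IH2.
Qed.

Lemma struct z : z < n -> isDh b z = (f z < z).
Proof. by move=> zn; apply: (proj2 (struct_aux (leqnn n))). Qed.

End Struct.

Lemma endsS_sum (s : seq bool) :
  endsS s = \sum_(1 <= p < (size s).+1)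
              (nth false s p.-1 && ((p == size s) || ~~ nth false s p)).
Proof.
elim: s => [|x s IH]; first by rewrite big_nil.
rewrite /= big_nat_recl // IH big_add1 /=; congr (_ + _).
  by case: s {IH} => [|y s].
by rewrite [RHS]big_add1.
Qed.

Section Perm.
Variable n : nat.
Local Notation m := n.*2.

Definition pf (pi : 'S_m) x := nth 0 (oneline pi) x.

Lemma pf_val pi (i : 'I_m) : pf pi i = pi i.
Proof. by rewrite /pf /oneline (nth_map i) ?size_enum_ord // nth_ord_enum. Qed.

Lemma pf_ord pi x (h : x < m) : pf pi x = pi (Ordinal h).
Proof. by rewrite -pf_val. Qed.

Lemma pf_bnd pi : bnd m (pf pi).
Proof. by move=> x h; rewrite (pf_ord pi h). Qed.

Lemma pf_invl pi : involution pi -> invl m (pf pi).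
Proof.
move=> /eqP E x h; rewrite (pf_ord pi h) pf_val.
by have := permK pi (Ordinal h); rewrite E => ->.
Qed.

Lemma pf_centro pi : centrosymmetric pi ->
  forall x, x < m -> pf pi (m.-1 - x) = m.-1 - pf pi x.
Proof.
move=> /forallP C x h; have := C (Ordinal h); rewrite (pf_ord pi h).
have -> : m.-1 - x = rev_ord (Ordinal h) by rewrite /=; lia.
rewrite pf_val => /eqP; lia.
Qed.

Lemma pf_av pi : avoids321 pi -> av m (pf pi).
Proof.
move=> /negP A i j k ij jk km fji fkj; apply: A.
have jm : j < m by lia.
have im : i < m by lia.
apply/existsP; exists (Ordinal im); apply/existsP; exists (Ordinal jm).
apply/existsP; exists (Ordinal km); apply/and4P; split => //.
  by rewrite -!pf_val.
by rewrite -!pf_val.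
Qed.

Definition gb (t : n.-tuple bool) := g n (fun x => nth false t x).

Definition cfun (t : n.-tuple bool) (i : 'I_m) : 'I_m := insubd i (gb t i).

Lemma cfun_val t (i : 'I_m) : val (cfun t i) = gb t i.
Proof. by rewrite /cfun val_insubd g_bnd. Qed.

Lemma cfun_inj t : injective (cfun t).
Proof.
move=> i j e; apply: ord_inj.
have := congr1 val e; rewrite !cfun_val => e'.
have I := @g_invl n (fun x => nth false t x).
by rewrite -(I _ (ltn_ord i)) -(I _ (ltn_ord j)) -/(gb t i) -/(gb t j) e'.
Qed.

Definition construct t : 'S_m := perm (@cfun_inj t).

Lemma pf_construct t x : x < m -> pf (construct t) x = gb t x.
Proof. by move=> h; rewrite (pf_ord _ h) permE cfun_val. Qed.

Definition code (pi : 'S_m) : n.-tuple bool := [tuple (val i < pf pi i) | i < n].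

Lemma nth_code pi x : x < n -> nth false (code pi) x = (x < pf pi x).
Proof. by move=> h; rewrite (nth_mktuple _ _ (Ordinal h)). Qed.


Lemma IC_construct t : IC321 (construct t).
Proof.
have B := @g_bnd n (fun x => nth false t x).
have I := @g_invl n (fun x => nth false t x).
apply/and3P; split.
- apply/forallP => i; apply/eqP.
  rewrite -!pf_val !pf_construct //.
  have -> : nat_of_ord (rev_ord i) = m.-1 - i by rewrite /=; lia.
  rewrite /gb g_centro //.
  have := B _ (ltn_ord i); lia.
- apply/eqP/permP => i.
  apply: (canLR (permK _)); apply: ord_inj.
  by rewrite -!pf_val !pf_construct ?(B _ (ltn_ord i)) // /gb I.
- apply/negP => /existsP[i /existsP[j /existsP[k /and4P[ij jk fji fkj]]]].
  move: fji fkj; rewrite -!pf_val !pf_construct // => fji fkj.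
  exact: (@g_av n (fun x => nth false t x) i j k ij jk (ltn_ord k) fji fkj).
Qed.

Lemma code_construct t : code (construct t) = t.
Proof.
apply: eq_from_tnth => i; rewrite (tnth_nth false) nth_code //.
rewrite pf_construct; last by have := ltn_ord i; lia.
rewrite /gb g_E; last by have := ltn_ord i; lia.
rewrite /isE (_ : i < m); last by have := ltn_ord i; lia.
by rewrite ltn_ord (tnth_nth false).
Qed.

Lemma construct_code pi : IC321 pi -> construct (code pi) = pi.
Proof.
case/and3P => Ce Ie Ae.
apply/permP => i; apply: ord_inj; rewrite -!pf_val pf_construct //.
set b := fun x => nth false (code pi) x.
have Bf := pf_bnd pi; have If := pf_invl Ie; have Af := pf_av Ae.
have Cf := pf_centro Ce.
have FCf := av_fcond Bf If Af.
have bE : forall x, x < n -> b x = (x < pf pi x) by move=> x h; rewrite /b nth_code.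
have St := struct Bf If FCf bE erefl.
have Bg := @g_bnd n b; have Ig := @g_invl n b.
apply: (rep Bg Bf Ig If (@g_incE n b) (av_incE Bf If Af)) => //.
- move=> x xm; rewrite g_E // /isE xm.
  case: (ltnP x n) => xn; first exact: bE.
  have zn : m.-1 - x < n by lia.
  rewrite St // Cf //; have := Bf _ xm; lia.
- move=> x xm; rewrite g_D // /isD xm.
  case: (ltnP x n) => xn; first exact: St.
  have zn : m.-1 - x < n by lia.
  have zm : m.-1 - x < m by lia.
  rewrite bE // Cf //; have := Bf _ xm; lia.
Qed.

Lemma desplus_construct t : desplus (construct t) = endsS t.
Proof.
rewrite /desplus doubleK endsS_sum size_tuple; apply: eq_big_nat => p /andP[p1 pn].
set b := fun x => nth false t x.
have pm : p < m by lia.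
have jm : p.-1 < m by lia.
rewrite /is_descent p1 pm /= -/(pf _ _) -/(pf _ _) !pf_construct //.
have D := @desc_char m (gb t) (@g_bnd n b) (@g_invl n b) (@g_incE n b) (@g_incD n b)
  (@g_fcond n b) p.-1.
rewrite (_ : p = p.-1.+1) in pm *; last lia.
rewrite D // /gb g_E // g_D // -/(b _) /isE /isD jm pm.
rewrite (_ : p.-1 < n); last lia.
rewrite -/(b _) (_ : p.-1.+1 = p); last lia.
case bj : (b p.-1) => //=.
case: (ltnP p n) => h.
  rewrite (_ : p == n = false); last lia.
  rewrite /isDh /= -/b; case: p p1 pn bj {D pm jm} h => // p _ _ /= bj h.
  by rewrite bj andbT.
rewrite (_ : p == n); last lia.
rewrite (_ : m.-1 - p = p.-1); last lia.
by move: bj; rewrite /b => ->.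
Qed.
End Perm.
Section Polys.
Variable R : comNzRingType.
Local Open Scope ring_scope.

Fixpoint Fab (n : nat) : {poly R} * {poly R} :=
  if n is n'.+1 then ('X * (Fab n').2 + (Fab n').1, (Fab n').1 + (Fab n').2)
  else (0, 1).

Lemma Fab_closed (N n : nat) : (n <= N)%N ->
  (Fab n).1 = \sum_(k < N.+1) ('C(n, k.*2.+1))%:R *: 'X^(k.+1) /\
  (Fab n).2 = \sum_(k < N.+1) ('C(n, k.*2))%:R *: 'X^k.
Proof.
elim: n => [|n IH] le.
  split; first by rewrite /= big1 // => k _; rewrite bin0n /= scale0r.
  rewrite /= big_ord_recl /= bin0 scale1r expr0 big1 ?addr0 // => k _.
  by rewrite bin0n /= scale0r.
have [IH1 IH2] := IH (ltnW le).
rewrite /= IH1 IH2; split.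
  rewrite big_distrr /= -big_split /=; apply: eq_bigr => k _.
  by rewrite binS natrD scalerDl -scalerAr exprS addrC.
rewrite [RHS]big_ord_recl [X in _ + X = _]big_ord_recl [X in X + _ = _]big_ord_recr /=.
rewrite !double0 !bin0 (@bin_small n (N.*2.+1)); last by rewrite -addnn; lia.
rewrite scale0r addr0 addrCA; congr (_ + _).
rewrite -big_split /=; apply: eq_bigr => k _.
by rewrite -scalerDl -natrD doubleS binS addnC.
Qed.
End Polys.

Section T.
Variable R : comNzRingType.
Local Open Scope ring_scope.

Lemma sum_tuple_cons (V : nmodType) n (F : seq bool -> V) :
  \sum_(t : n.+1.-tuple bool) F t = \sum_(x : bool) \sum_(t : n.-tuple bool) F (x :: t).
Proof.
rewrite pair_big /=.
rewrite (reindex (fun p : bool * n.-tuple bool => [tuple of p.1 :: p.2])) /=; last first.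
  exists (fun t : n.+1.-tuple bool => (thead t, [tuple of behead t])) => [[x t]|t] _ /=.
    by congr (_, _); apply: val_inj.
  by rewrite [RHS]tuple_eta.
by [].
Qed.

Lemma sum_ends n :
  \sum_(t : n.-tuple bool) (if head false t then 'X^(endsS t) else 0 : {poly R}) = (Fab R n).1 /\
  \sum_(t : n.-tuple bool) (if head false t then 0 else 'X^(endsS t) : {poly R}) = (Fab R n).2.
Proof.
elim: n => [|n [IH1 IH2]].
  by split; rewrite (big_pred1 [tuple]) //= => t; rewrite [t]tuple0; apply/esym/eqP.
rewrite (@sum_tuple_cons _ _ (fun s => if head false s then 'X^(endsS s) else 0 : {poly R})).
rewrite (@sum_tuple_cons _ _ (fun s => if head false s then 0 else 'X^(endsS s) : {poly R})).
rewrite !big_bool /= -IH1 -IH2 !big1_eq addr0 add0r; split.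
  rewrite mulr_sumr -big_split /=; apply: eq_bigr => t _.
  case: t => [[|x t] /= _]; first by rewrite expr0 mulr1 addr0 expr1.
  by case: x; rewrite /= ?mulr0 ?add0r ?addr0 ?add1n ?exprS.
rewrite -big_split /=; apply: eq_bigr => t _.
by case: ifP; rewrite ?addr0 ?add0r.
Qed.
End T.

Section Part2.
Local Open Scope ring_scope.

Lemma part2 (R : rcfType) (n : nat) (q : R) : 0 <= q ->
     \sum_(0 <= k < n.+2) ('C(n.+1, k.*2))%:R * q ^+ k
       = ((1 + Num.sqrt q) ^+ n.+1 + (1 - Num.sqrt q) ^+ n.+1) / 2%:R.
Proof.
move=> q0; set s := Num.sqrt q.
have ss : s * s = q by rewrite /s -expr2 sqr_sqrtr.
have key : forall N, (1 + s) ^+ N + (1 - s) ^+ N = 2%:R * (Fab R N).2.[q] /\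
      s * ((1 + s) ^+ N - (1 - s) ^+ N) = 2%:R * (Fab R N).1.[q].
  elim=> [|N [IH1 IH2]]; first by rewrite /= !expr0 hornerC horner0; split; ring.
  rewrite /= !hornerE !exprS.
  move: IH1 IH2; set A := (1 + s) ^+ N; set B := (1 - s) ^+ N => IH1 IH2; split.
    have -> : (1 + s) * A + (1 - s) * B = (A + B) + s * (A - B) by ring.
    rewrite IH1 IH2; ring.
  have -> : s * ((1 + s) * A - (1 - s) * B) = s * (A - B) + (s * s) * (A + B) by ring.
  rewrite IH1 IH2 ss; ring.
have E : \sum_(0 <= k < n.+2) ('C(n.+1, k.*2))%:R * q ^+ k = (Fab R n.+1).2.[q].
  have [_ ->] := Fab_closed R (leqnn n.+1).
  rewrite big_mkord horner_sum; apply: eq_bigr => k _.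
  by rewrite hornerZ hornerXn.
rewrite E (proj1 (key n.+1)) mulrC mulrA mulVf ?mul1r //.
by rewrite pnatr_eq0.
Qed.

End Part2.

Local Open Scope ring_scope.

Theorem mainTheorem1 (R : rcfType) (n : nat) :
  (\sum_(pi : 'S_(n.*2) | IC321 pi) 'X^(desplus pi)
     = \sum_(0 <= k < n.+2) ('C(n.+1, k.*2))%:R *: ('X^k : {poly R}))
  /\
  (forall q : R, 0 <= q ->
     \sum_(0 <= k < n.+2) ('C(n.+1, k.*2))%:R * q ^+ k
       = ((1 + Num.sqrt q) ^+ n.+1 + (1 - Num.sqrt q) ^+ n.+1) / 2%:R).
Proof.
split; last exact: part2.
rewrite (reindex_onto (@construct n) (@code n) (fun pi h => construct_code h)).
rewrite (eq_bigl predT) => [|t]; last by rewrite IC_construct code_construct eqxx.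
under eq_bigr do rewrite desplus_construct.
have [h1 h2] := sum_ends R n.
have -> : \sum_(t : n.-tuple bool) ('X^(endsS t) : {poly R}) =
   \sum_(t : n.-tuple bool) (if head false t then 'X^(endsS t) else 0 : {poly R}) +
   \sum_(t : n.-tuple bool) (if head false t then 0 else 'X^(endsS t) : {poly R}).
  by rewrite -big_split /=; apply: eq_bigr => t _; case: ifP => _; rewrite ?addr0 ?add0r.
rewrite h1 h2 (_ : (Fab R n).1 + (Fab R n).2 = (Fab R n.+1).2) //.
have [_ ->] := Fab_closed R (leqnn n.+1).
by rewrite big_mkord.
Qed.
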